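(* Let $X$ be a compact metric space, $(f_n)_{n\ge1}$ a sequence of continuous maps $X\to X$, and $(k_n)_{n\ge1}$ a strictly increasing sequence of positive integers. Define $\hat f_1=f_{k_1}\circ\cdots\circ f_1$ and $\hat f_n=f_{k_n}\circ\cdots\circ f_{k_{n-1}+1}$ for $n\ge2$, and let $\gamma\colon\mathbb{N}\to\mathbb{N}$, $\gamma(n)=k_n$. If $p,q\in\mathbb{N}^*$ and $\overline{\gamma}(q)=p$, then $\hat f_1^q=f_1^p$. In particular $E(X,\hat f_{1,\infty})\subseteq E(X,f_{1,\infty})$.
   Context: $\mathbb{N}=\{1,2,3,\dots\}$, $\beta(\mathbb{N})$ the ultrafilters on $\mathbb{N}$ (principal ones identified with elements of $\mathbb{N}$), $\mathbb{N}^*$ the free ones. For $p\in\mathbb{N}^*$, $p\text{-}\lim_n x_n$ is the unique $y$ with $\{n:x_n\in V\}\in p$ for all neighbourhoods $V$ of $y$. For a sequence $(g_n)$ of continuous self-maps of $X$: $g_1^n=g_n\circ\cdots\circ g_1$, $g_1^p(x)=p\text{-}\lim_n g_1^n(x)$ for $p\in\mathbb{N}^*$, and $E(X,g_{1,\infty})$ is the closure of $\{g_1^n:n\in\mathbb{N}\}$ in $X^X$ (pointwise topology). $\overline{\gamma}$ is the Stone extension of $\gamma$: $\overline{\gamma}(q)=\{A\subseteq\mathbb{N}:\gamma^{-1}(A)\in q\}$. *)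

(* Defs.v *)
From HB Require Import structures.
From mathcomp Require Import all_boot all_order all_algebra.
From mathcomp Require Import all_classical all_reals all_analysis.
Set Implicit Arguments. Unset Strict Implicit. Unset Printing Implicit Defensive.
Import Order.TTheory GRing.Theory Num.Theory.
Local Open Scope classical_set_scope.

Definition is_ultrafilter (p : set (set nat)) : Prop :=
  [/\ p setT, ~ p set0,
      (forall A B, p A -> p B -> p (A `&` B)),
      (forall A B, A `<=` B -> p A -> p B) &
      (forall A, p A \/ p (~` A))].

(* free (non-principal) ultrafilters: elements of N^* *)
Definition free_ultrafilter (p : set (set nat)) : Prop :=
  is_ultrafilter p /\ (forall A : set nat, finite_set A -> ~ p A).

Definition is_plim {X : topologicalType} (p : set (set nat)) (u : nat -> X) (y : X) : Prop :=
  forall V, nbhs y V -> p [set n | V (u n)].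

Definition plim {X : topologicalType} (p : set (set nat)) (u : nat -> X) : X :=
  xget (u 0%N) [set y | is_plim p u y].

Fixpoint iter_seq {X : Type} (g : nat -> X -> X) (n : nat) (x : X) : X :=
  match n with
  | 0 => x
  | m.+1 => g m.+1 (iter_seq g m x)
  end.

Fixpoint blk {X : Type} (g : nat -> X -> X) (a l : nat) (x : X) : X :=
  match l with
  | 0 => x
  | m.+1 => g (a + m.+1)%N (blk g a m x)
  end.

Definition kprev (k : nat -> nat) (n : nat) : nat := if (n <= 1)%N then 0%N else k n.-1.

(* hat f_n = f_(k_n) o ... o f_(k_(n-1)+1), with k_0 := 0, i.e. hat f_1 = f_(k_1) o ... o f_1 *)
Definition hatf {X : Type} (f : nat -> X -> X) (k : nat -> nat) (n : nat) : X -> X :=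
  blk f (kprev k n) (k n - kprev k n).

(* Stone extension of gamma = k (restricted to N = {1,2,...}) *)
Definition stone_ext (k : nat -> nat) (q : set (set nat)) : set (set nat) :=
  [set A | q [set n | (0 < n)%N /\ A (k n)]].

(* E(X, g_{1,oo}) : closure of {g_1^n : n >= 1} in X^X with the pointwise topology *)
Definition Eclos {X : topologicalType} (g : nat -> X -> X) : set {ptws X -> X} :=
  closure ([set iter_seq g n | n in [set n : nat | (0 < n)%N]] : set {ptws X -> X}).

(* Main.v *)
Require Import Defs.
From HB Require Import structures.
From mathcomp Require Import all_boot all_order all_algebra.
From mathcomp Require Import all_classical all_reals all_analysis.
Import Order.TTheory GRing.Theory Num.Theory.
Local Open Scope classical_set_scope.

Lemma blk_iter {X : Type} (g : nat -> X -> X) a l x :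
  blk g a l (iter_seq g a x) = iter_seq g (a + l) x.
Proof. elim: l => [|l IH] /=; first by rewrite addn0. by rewrite IH addnS. Qed.

Lemma iter_hat {X : Type} (f : nat -> X -> X) (k : nat -> nat) :
  (forall n, (0 < n)%N -> (k n < k n.+1)%N) ->
  forall n x, (0 < n)%N -> iter_seq (hatf f k) n x = iter_seq f (k n) x.
Proof.
move=> hk; elim=> [//|[|m] IH] x _.
  by rewrite /= /hatf /kprev /= subn0 -(blk_iter f 0).
have -> : iter_seq (hatf f k) m.+2 x = hatf f k m.+2 (iter_seq (hatf f k) m.+1 x) by [].
rewrite IH // /hatf /kprev /= blk_iter subnKC //.
exact: ltnW (hk _ _).
Qed.

Lemma plim_unique (X : topologicalType) (p : set (set nat)) (u : nat -> X) y z :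
  hausdorff_space X -> is_ultrafilter p -> is_plim p u y -> is_plim p u z -> y = z.
Proof.
move=> hX [pT p0 pI pS pU] hy hz; apply: hX => A B nA nB.
apply: contrapT => hne; apply: p0.
have := pI _ _ (hy _ nA) (hz _ nB).
apply: pS => n [An Bn]; apply: hne; by exists (u n).
Qed.

Lemma plim_exists (X : topologicalType) (p : set (set nat)) (u : nat -> X) :
  compact [set: X] -> is_ultrafilter p -> exists y, is_plim p u y.
Proof.
move=> cX [pT p0 pI pS pU].
pose F := [set V : set X | p [set n | V (u n)]].
have PF : ProperFilter F.
  apply: Build_ProperFilter; first exact: p0.
  apply: Build_Filter; first exact: pT.
    by move=> A B hA hB; exact: pI _ _ hA hB.
  by move=> P Q PQ; apply: pS => n /PQ.
have [y [_ cy]] := cX F PF pT.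
exists y => V nV.
case: (pU [set n | V (u n)]) => // hc; exfalso.
have : F (~` V) by exact: hc.
move=> /cy /(_ nV) [w [nw vw]]; exact: nw.
Qed.

Lemma kpos (k : nat -> nat) : (0 < k 1)%N -> (forall n, (0 < n)%N -> (k n < k n.+1)%N) ->
  forall n, (0 < n)%N -> (0 < k n)%N.
Proof.
move=> k1 hk; elim=> [//|[|m] IH] _ //.
have h1 := IH isT; have h2 := hk m.+1 isT.
exact: leq_trans h1 (ltnW h2).
Qed.

Theorem theorem2p8 (R : realType) (X : pseudoMetricType R)
  (f : nat -> X -> X) (k : nat -> nat) :
  hausdorff_space X -> compact [set: X] ->
  (forall n, (0 < n)%N -> continuous (f n)) ->
  (0 < k 1)%N -> (forall n, (0 < n)%N -> (k n < k n.+1)%N) ->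
  forall p q : set (set nat), free_ultrafilter p -> free_ultrafilter q ->
  stone_ext k q = p ->
  (forall x : X, plim q (fun n => iter_seq (hatf f k) n x) = plim p (fun n => iter_seq f n x))
  /\ Eclos (hatf f k) `<=` Eclos f.
Proof.
move=> hX cX _ k1 hk p q [up _] [uq fq] hpq; split.
  move=> x.
  have [y hy] := @plim_exists _ q (fun n => iter_seq (hatf f k) n x) cX uq.
  have hy' : is_plim p (fun n => iter_seq f n x) y.
    move=> V nV; rewrite -hpq /stone_ext /=.
    have q0 : q (~` [set 0%N]).
      case: uq => _ _ _ _ pU; case: (pU [set 0%N]) => // h.
      by exfalso; apply: (fq _ (finite_set1 0%N)).
    case: uq => _ _ pI pS _.
    have := pI _ _ (hy _ nV) q0; apply: pS => n [Vn n0].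
    have n0' : (0 < n)%N by rewrite lt0n; apply/eqP.
    by split => //; rewrite -iter_hat.
  rewrite /plim (xget_unique _ hy); last by move=> z hz; exact: plim_unique hX uq hz hy.
  by rewrite (xget_unique _ hy') // => z hz; exact: plim_unique hX up hz hy'.
rewrite /Eclos; apply: closureS => g [n n0 <-].
have kn : (0 < k n)%N := kpos k k1 hk n n0.
exists (k n) => //; apply: funext => x; exact: (esym (iter_hat f k hk n x n0)).
Qed.
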